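(* Let $\mathcal{Q}=\mathcal{Q}_\ell(T,X,Y)$ and let $\alpha\in\mathcal{Q}$. Then the $H^{\mathcal{P}}$-canonical form of $\alpha$ (in $\mathcal{P}_\ell(T,X)$) is a product of elements of $H^{\mathcal{Q}}$. Moreover, $H^{\mathcal{P}}\cap\mathcal{Q}=H^{\mathcal{Q}}$ and $X\cap\mathcal{Q}=Y$.
   Context: Let $T$ be a monoid, $X$ a semilattice with identity $1_X$ (ordered by $e\le f$ iff $ef=e$) with an order-preserving left action of $T$. $\mathcal{P}_\ell(T,X)$: let $T*X$ be the semigroup free product acting on $X$ (elements of $X$ act by multiplication), $\omega^+=\omega\cdot1_X$, $\sim$ the semigroup congruence generated by $\{(\alpha^+\alpha,\alpha)\}\cup\{(1_T,1_X)\}$, and $\mathcal{P}_\ell(T,X)=(T*X)/\sim$ with $[\alpha]^+=[\alpha^+]$; $X$, $T$ are identified with their injective images. It is a left Ehresmann monoid with projections $X$, unique $T$-normal forms $t_0e_1t_1\cdots e_nt_n$ ($n\ge0$, $e_i\in X\setminus\{1\}$, $t_1,\dots,t_{n-1}\in T\setminus\{1\}$, $e_i<(t_ie_{i+1}\cdots e_nt_n)^+$), and unary operation $a^*=e_n$ if $n\ge1$, $t_n=1$, and $a^*=1$ otherwise. $H^{\mathcal{P}}=\{te:t\in T,e\in X\}$; every element of $\mathcal{P}_\ell(T,X)$ has a unique $H^{\mathcal{P}}$-canonical form, i.e. expression $h_1\cdots h_n$, $h_i\in H^{\mathcal{P}}$, with $h_i^*<h_{i+1}^+$ ($1\le i<n$)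 and $h_i\notin X$ ($2\le i\le n$). Let $Y$ be a subsemilattice of $X$ having an identity, satisfying (A): for all $t\in T$, $e,f\in Y$ with $e\le f$, $t\cdot f\in Y$ implies $t\cdot e\in Y$; (B): for all $t\in T$ there is $g\in Y$ with $t\cdot g\in Y$. $H^{\mathcal{Q}}=\{te:t\in T,e\in Y,t\cdot e\in Y\}$, and $\mathcal{Q}_\ell(T,X,Y)$ is the subsemigroup of $\mathcal{P}_\ell(T,X)$ generated by $H^{\mathcal{Q}}$. *)

(* Defs.v *)
From Stdlib Require Import List.
Import ListNotations.

Record Data (T X : Type) := {
  tmul : T -> T -> T;
  tone : T;
  xmul : X -> X -> X;
  xone : X;
  act  : T -> X -> X
}.
Arguments tmul {T X}. Arguments tone {T X}. Arguments xmul {T X}.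
Arguments xone {T X}. Arguments act {T X}.

Section Defs.
Context {T X : Type} (D : Data T X).

Definition xle (e f : X) : Prop := xmul D e f = e.
Definition xlt (e f : X) : Prop := xle e f /\ e <> f.

Record Hyps : Prop := {
  tmulA : forall a b c, tmul D a (tmul D b c) = tmul D (tmul D a b) c;
  tmul1l : forall a, tmul D (tone D) a = a;
  tmul1r : forall a, tmul D a (tone D) = a;
  xmulA : forall a b c, xmul D a (xmul D b c) = xmul D (xmul D a b) c;
  xmulC : forall a b, xmul D a b = xmul D b a;
  xmulI : forall a, xmul D a a = a;
  xmul1l : forall a, xmul D (xone D) a = a;
  act1 : forall x, act D (tone D) x = x;
  actM : forall s t x, act D (tmul D s t) x = act D s (act D t x);
  act_mono : forall t e f, xle e f -> xle (act D t e) (act D t f)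
}.

Definition SubSemilatticeWithId (Y : X -> Prop) : Prop :=
  (forall e f, Y e -> Y f -> Y (xmul D e f)) /\
  (exists u, Y u /\ forall e, Y e -> xmul D u e = e).
Definition condA (Y : X -> Prop) : Prop :=
  forall t e f, Y e -> Y f -> xle e f -> Y (act D t f) -> Y (act D t e).
Definition condB (Y : X -> Prop) : Prop :=
  forall t, exists g, Y g /\ Y (act D t g).

(* Elements of the free product T*X are (nonempty) words; letters are
   inl t (t in T) and inr e (e in X).  Product = concatenation. *)
Definition letter := (T + X)%type.
Definition word := list letter.

Definition wact (w : word) (x : X) : X :=
  fold_right (fun l y => match l with inl t => act D t y | inr e => xmul D e y end) x w.
Definition wplus (w : word) : X := wact w (xone D).

(* generating pairs: free-product relations, (alpha^+ alpha, alpha), (1_T,1_X) *)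
Inductive Pgen : word -> word -> Prop :=
| gen_T s t : Pgen [inl s; inl t] [inl (tmul D s t)]
| gen_X e f : Pgen [inr e; inr f] [inr (xmul D e f)]
| gen_plus a : a <> [] -> Pgen (inr (wplus a) :: a) a
| gen_one : Pgen [inl (tone D)] [inr (xone D)].

(* the semigroup congruence generated; equality in P_l(T,X) *)
Inductive Peq : word -> word -> Prop :=
| Peq_ctx u a b v : Pgen a b -> Peq (u ++ a ++ v) (u ++ b ++ v)
| Peq_refl a : Peq a a
| Peq_sym a b : Peq a b -> Peq b a
| Peq_trans a b c : Peq a b -> Peq b c -> Peq a c.

Definition te (t : T) (e : X) : word := [inl t; inr e].

Definition inHP (a : word) : Prop := exists t e, Peq a (te t e).
Definition inHQ (Y : X -> Prop) (a : word) : Prop :=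
  exists t e, Y e /\ Y (act D t e) /\ Peq a (te t e).
Definition inX (a : word) : Prop := exists x, Peq a [inr x].

Definition inQ (Y : X -> Prop) (a : word) : Prop :=
  exists hs : list word, hs <> [] /\ Forall (inHQ Y) hs /\ Peq a (concat hs).

(* T-normal forms t0 e1 t1 ... en tn, encoded as t0 and [(e1,t1);...;(en,tn)] *)
Fixpoint nf_tail (l : list (X * T)) : word :=
  match l with [] => [] | (e, t) :: r => inr e :: inl t :: nf_tail r end.
Definition nf_word (t0 : T) (l : list (X * T)) : word := inl t0 :: nf_tail l.
Fixpoint nf_ok (l : list (X * T)) : Prop :=
  match l with
  | [] => True
  | (e, t) :: r =>
      e <> xone D /\ (r <> [] -> t <> tone D) /\
      xlt e (wplus (inl t :: nf_tail r)) /\ nf_ok r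
  end.

Definition IsStar (a : word) (x : X) : Prop :=
  exists t0 l, nf_ok l /\ Peq a (nf_word t0 l) /\
    ((l = [] /\ x = xone D) \/
     (exists l' e t, l = l' ++ [(e, t)] /\
        ((t = tone D /\ x = e) \/ (t <> tone D /\ x = xone D)))).

Definition HPCanonical (hs : list word) (a : word) : Prop :=
  hs <> [] /\ Forall inHP hs /\ Peq a (concat hs) /\
  (forall i, S i < length hs ->
     exists x, IsStar (nth i hs []) x /\ xlt x (wplus (nth (S i) hs []))) /\
  (forall i, 1 <= i < length hs -> ~ inX (nth i hs [])).

End Defs.

(* Main.v *)
Require Import Defs.
From Stdlib Require Import List ClassicalEpsilon Lia.
Import ListNotations.

Section S.
Variables (T X : Type) (D : Data T X) (HD : Hyps D).

Notation m := (xmul D).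
Notation one := (xone D).
Notation tone := (tone D).

Lemma mC x y : m x y = m y x. Proof. apply (xmulC D HD). Qed.
Lemma mA x y z : m x (m y z) = m (m x y) z. Proof. apply (xmulA D HD). Qed.
Lemma mI x : m x x = x. Proof. apply (xmulI D HD). Qed.
Lemma m1l x : m one x = x. Proof. apply (xmul1l D HD). Qed.
Lemma m1r x : m x one = x. Proof. rewrite mC; apply m1l. Qed.
Lemma le_refl x : xle D x x. Proof. apply mI. Qed.
Lemma le_trans x y z : xle D x y -> xle D y z -> xle D x z.
Proof. unfold xle; intros H1 H2. rewrite <- H1, <- mA, H2. reflexivity. Qed.
Lemma le_antisym x y : xle D x y -> xle D y x -> x = y.
Proof. unfold xle; intros H1 H2. rewrite <- H1, mC; exact H2. Qed.
Lemma le_ml x y : xle D (m x y) x.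
Proof. unfold xle. rewrite <- mA, (mC y x), mA, mI. reflexivity. Qed.
Lemma le_mr x y : xle D (m x y) y.
Proof. unfold xle. rewrite <- mA, mI. reflexivity. Qed.
Lemma le_glb z x y : xle D z x -> xle D z y -> xle D z (m x y).
Proof. unfold xle; intros H1 H2. rewrite mA, H1, H2. reflexivity. Qed.
Lemma le_one x : xle D x one. Proof. apply m1r. Qed.
Lemma act1 x : act D tone x = x. Proof. apply (act1 D HD). Qed.
Lemma actM s t x : act D (tmul D s t) x = act D s (act D t x). Proof. apply (actM D HD). Qed.

Definition dec (P : Prop) : {P} + {~ P} := excluded_middle_informative P.

Definition NF := (T * list (X * T))%type.
Fixpoint pt (l : list (X * T)) : X :=
  match l with [] => one | (e, t) :: r => m e (act D t (pt r)) end.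
Definition plusNF (n : NF) : X := act D (fst n) (pt (snd n)).
Definition actT (s : T) (n : NF) : NF := (tmul D s (fst n), snd n).
Definition G (g : X) (n : NF) : NF :=
  if dec (g = plusNF n) then n else
  match n with
  | (t0, []) => (tone, [(g, t0)])
  | (t0, (e1, t1) :: r) =>
      if dec (t0 = tone) then (tone, (g, t1) :: r) else (tone, (g, t0) :: (e1, t1) :: r)
  end.
Definition actX (f : X) (n : NF) : NF := G (m f (plusNF n)) n.
Definition actL (l : letter) (n : NF) : NF :=
  match l with inl s => actT s n | inr f => actX f n end.
Definition actW (w : word) (n : NF) : NF := fold_right actL n w.
Definition n0 : NF := (tone, []).

Lemma G_abs n : G (plusNF n) n = n.
Proof. unfold G. destruct (dec _); [reflexivity | congruence]. Qed.
Lemma G_nil t0 g : g <> plusNF (t0, []) -> G g (t0, []) = (tone, [(g, t0)]).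
Proof. intro H. unfold G. destruct (dec _); [congruence | reflexivity]. Qed.
Lemma G_cons1 g e1 t1 r : g <> plusNF (tone, (e1, t1) :: r) ->
  G g (tone, (e1, t1) :: r) = (tone, (g, t1) :: r).
Proof. intro H. unfold G. destruct (dec _); [congruence|]. destruct (dec _); congruence. Qed.
Lemma G_cons2 t0 g e1 t1 r : g <> plusNF (t0, (e1, t1) :: r) -> t0 <> tone ->
  G g (t0, (e1, t1) :: r) = (tone, (g, t0) :: (e1, t1) :: r).
Proof. intros H H'. unfold G. destruct (dec _); [congruence|]. destruct (dec _); congruence. Qed.

Lemma plus_G h n : xle D h (plusNF n) -> plusNF (G h n) = h.
Proof.
  intro Hle. destruct (dec (h = plusNF n)) as [E|NE].
  { rewrite E, G_abs. reflexivity. }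
  destruct n as [t0 [|[e1 t1] r]].
  - rewrite G_nil by exact NE. unfold plusNF in *; simpl in *. rewrite act1. exact Hle.
  - destruct (dec (t0 = tone)) as [E0|NE0].
    + subst t0. rewrite G_cons1 by exact NE. unfold plusNF in *; simpl in *.
      rewrite act1 in *. apply (le_trans _ _ _ Hle (le_mr _ _)).
    + rewrite G_cons2 by assumption. unfold plusNF in *; simpl in *.
      rewrite act1. exact Hle.
Qed.

Lemma plus_actL a n : plusNF (actL a n) =
  match a with inl t => act D t (plusNF n) | inr e => m e (plusNF n) end.
Proof.
  destruct a as [s|f]; simpl.
  - unfold actT, plusNF; simpl. apply actM.
  - unfold actX. apply plus_G. apply le_mr.
Qed.

Lemma plus_actW w n : plusNF (actW w n) = wact D w (plusNF n).
Proof.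
  induction w as [|a w IH]; [reflexivity|].
  change (actW (a :: w) n) with (actL a (actW w n)).
  rewrite plus_actL, IH. destruct a; reflexivity.
Qed.

Lemma wact_mono w x y : xle D x y -> xle D (wact D w x) (wact D w y).
Proof.
  induction w as [|a w IH]; intro H; [exact H|].
  specialize (IH H). destruct a as [t|e]; simpl.
  - apply (act_mono D HD). exact IH.
  - apply le_glb; [apply le_ml| apply (le_trans _ _ _ (le_mr _ _) IH)].
Qed.

Lemma actW_app u v n : actW (u ++ v) n = actW u (actW v n).
Proof. unfold actW. apply fold_right_app. Qed.

Lemma GG g h n : xle D h (plusNF n) -> xle D g h -> G g (G h n) = G g n.
Proof.
  intros Hh Hg. pose proof (plus_G h n Hh) as Hp.
  destruct (dec (h = plusNF n)) as [E|NE].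
  { rewrite E, G_abs. reflexivity. }
  assert (NEg : g <> plusNF n).
  { intro E. apply NE. apply le_antisym; [exact Hh|]. rewrite <- E. exact Hg. }
  destruct n as [t0 [|[e1 t1] r]].
  - rewrite (G_nil _ h) in Hp by assumption. rewrite (G_nil t0 h) by assumption. rewrite (G_nil t0 g) by assumption.
    destruct (dec (g = h)) as [E|NE2].
    + subst g. assert (E := G_abs (tone, [(h, t0)])). rewrite Hp in E. exact E.
    + rewrite G_cons1 by congruence. reflexivity.
  - destruct (dec (t0 = tone)) as [E0|NE0].
    + subst t0. rewrite (G_cons1 h) in Hp by assumption. rewrite (G_cons1 h e1 t1 r) by exact NE. rewrite (G_cons1 g e1 t1 r) by exact NEg.
      destruct (dec (g = h)) as [E|NE2].
      * subst g. assert (E := G_abs (tone, (h, t1) :: r)). rewrite Hp in E. exact E.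
      * rewrite G_cons1 by congruence. reflexivity.
    + rewrite (G_cons2 _ h) in Hp by assumption. rewrite (G_cons2 t0 h e1 t1 r) by assumption. rewrite (G_cons2 t0 g e1 t1 r) by assumption.
      destruct (dec (g = h)) as [E|NE2].
      * subst g. assert (E := G_abs (tone, (h, t0) :: (e1, t1) :: r)). rewrite Hp in E. exact E.
      * rewrite G_cons1 by congruence. reflexivity.
Qed.

Lemma actX_abs f n : xle D (plusNF n) f -> actX f n = n.
Proof. intro H. unfold actX. rewrite mC, H. apply G_abs. Qed.

Lemma gen_inv a b : Pgen D a b -> forall n, actW a n = actW b n.
Proof.
  intros Hg n. destruct Hg as [s t|e f|a Ha|].
  - cbn [actW fold_right actL]. destruct n as [t0 l]. unfold actT; simpl.
    rewrite (tmulA D HD). reflexivity.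
  - cbn [actW fold_right actL].     unfold actX. rewrite plus_G by apply le_mr. rewrite GG by apply le_mr.
    rewrite mA. reflexivity.
  - change (actW (inr (wplus D a) :: a) n) with (actX (wplus D a) (actW a n)).
    apply actX_abs. rewrite plus_actW. apply wact_mono. apply le_one.
  - cbn [actW fold_right actL]. rewrite actX_abs by apply le_one.
    destruct n; unfold actT; simpl. rewrite (tmul1l D HD). reflexivity.
Qed.

Lemma Peq_inv a b : Peq D a b -> forall n, actW a n = actW b n.
Proof.
  induction 1 as [u a b v Hg| | |]; intro n.
  - rewrite !actW_app. rewrite (gen_inv a b Hg). reflexivity.
  - reflexivity.
  - symmetry; auto.
  - rewrite IHPeq1; auto.
Qed.

Lemma plus_n0 : plusNF n0 = one.
Proof. unfold plusNF; simpl. apply act1. Qed.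

Lemma actW_te t e n : actW (te t e) n = actT t (actX e n).
Proof. reflexivity. Qed.

Lemma eval_te1 t : actW (te t one) n0 = (t, []).
Proof.
  rewrite actW_te, actX_abs by (rewrite plus_n0; apply le_refl).
  unfold actT; simpl. rewrite (tmul1r D HD). reflexivity.
Qed.
Lemma eval_te2 t e : e <> one -> actW (te t e) n0 = (t, [(e, tone)]).
Proof.
  intro He. rewrite actW_te. unfold actX. rewrite plus_n0, m1r.
  unfold n0. rewrite G_nil by (fold n0; rewrite plus_n0; exact He).
  unfold actT; simpl. rewrite (tmul1r D HD). reflexivity.
Qed.

Lemma wplus_eval w : wplus D w = plusNF (actW w n0).
Proof. rewrite plus_actW, plus_n0. reflexivity. Qed.

Lemma wplus_Peq a b : Peq D a b -> wplus D a = wplus D b.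
Proof. intro H. rewrite !wplus_eval. rewrite (Peq_inv a b H). reflexivity. Qed.

Lemma wact_tail r : wact D (nf_tail r) one = pt r.
Proof.
  induction r as [|[e t] r IH]; [reflexivity|]. simpl. rewrite <- IH. reflexivity.
Qed.

Lemma eval_tail l : nf_ok D l -> actW (nf_tail l) n0 = (tone, l).
Proof.
  induction l as [|[e t] r IH]; [reflexivity|].
  simpl nf_ok. intros (He & Ht & Hlt & Hr).
  change (actW (nf_tail ((e, t) :: r)) n0) with (actX e (actT t (actW (nf_tail r) n0))).
  rewrite IH by exact Hr. unfold actT; simpl. rewrite (tmul1r D HD).
  destruct Hlt as [Hle Hne]. unfold wplus in Hle, Hne. simpl in Hle, Hne.
  rewrite wact_tail in Hle, Hne.
  unfold actX. unfold plusNF at 1; simpl. rewrite Hle.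
  destruct r as [|[e1 t1] r].
  - rewrite G_nil; [reflexivity|]. exact Hne.
  - rewrite G_cons2; [reflexivity|exact Hne|]. apply Ht. discriminate.
Qed.

Lemma eval_nf t0 l : nf_ok D l -> actW (nf_word t0 l) n0 = (t0, l).
Proof.
  intro H. change (actW (nf_word t0 l) n0) with (actT t0 (actW (nf_tail l) n0)).
  rewrite eval_tail by exact H. unfold actT; simpl. rewrite (tmul1r D HD). reflexivity.
Qed.


Lemma G_gen g t0 l : g <> plusNF (t0, l) -> (l <> [] -> t0 <> tone) ->
  G g (t0, l) = (tone, (g, t0) :: l).
Proof.
  intros H1 H2. destruct l as [|[e1 t1] r].
  - apply G_nil; exact H1.
  - apply G_cons2; [exact H1|]. apply H2; discriminate.
Qed.

Lemma te1_X e : Peq D (te tone e) [inr e].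
Proof.
  eapply Peq_trans.
  - exact (Peq_ctx D [] [inl tone] [inr one] [inr e] (gen_one D)).
  - simpl. assert (H := Peq_ctx D [] [inr one; inr e] [inr (m one e)] [] (gen_X D one e)).
    simpl in H. rewrite m1l in H. exact H.
Qed.

Lemma IsStar_te h t e x : IsStar D h x -> Peq D h (te t e) ->
  (e = one -> x = one) /\ (e <> one -> x = e).
Proof.
  intros (t0 & l & Hok & Hpeq & Hcase) Hh.
  assert (E : actW h n0 = (t0, l)) by (rewrite (Peq_inv _ _ Hpeq); apply eval_nf; exact Hok).
  rewrite (Peq_inv _ _ Hh) in E. split; intro He.
  - subst e. rewrite eval_te1 in E. injection E as <- <-.
    destruct Hcase as [[_ Hx]|(l' & e2 & t2 & Hl & _)]; [exact Hx|].
    exfalso. apply (app_cons_not_nil l' [] (e2, t2)). exact Hl.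
  - rewrite eval_te2 in E by exact He. injection E as <- <-.
    destruct Hcase as [[Hl _]|(l' & e2 & t2 & Hl & Hx)]; [discriminate|].
    symmetry in Hl. apply app_eq_unit in Hl.
    destruct Hl as [[_ Hl]|[_ Hl]]; [|discriminate].
    injection Hl as -> ->.
    destruct Hx as [[_ Hx]|[Hne _]]; [exact Hx| congruence].
Qed.

Variables (Y : X -> Prop) (HY : SubSemilatticeWithId D Y) (HA : condA D Y).

Fixpoint P (t0 : T) (l : list (X * T)) : Prop :=
  match l with
  | [] => Y one /\ Y (act D t0 one)
  | (f, s) :: r => Y f /\ Y (act D t0 f) /\ ((s = tone /\ r = []) \/ P s r)
  end.
Definition PN (n : NF) : Prop := P (fst n) (snd n).
Definition W (n : NF) : Prop :=
  match snd n with [] => True | (f, s) :: r => xle D f (act D s (pt r)) end.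
Definition q (l : list (X * T)) : X := match l with [] => one | (f, _) :: _ => f end.

Lemma W_plus n : W n -> plusNF n = act D (fst n) (q (snd n)).
Proof.
  destruct n as [t0 [|[f s] r]]; unfold W, plusNF; simpl; intro H; [reflexivity|].
  rewrite H. reflexivity.
Qed.

Lemma P_q t0 l : P t0 l -> Y (q l) /\ Y (act D t0 (q l)).
Proof. destruct l as [|[f s] r]; simpl; tauto. Qed.

Lemma good_step N t e : PN N -> W N -> Y e -> Y (act D t e) ->
  PN (actT t (actX e N)) /\ W (actT t (actX e N)).
Proof.
  intros HP HW Ye Yte. destruct N as [t0 l].
  assert (Hp := W_plus _ HW). simpl in Hp.
  destruct (P_q _ _ HP) as [Yq Ytq].
  set (p := plusNF (t0, l)) in *.
  assert (Yp : Y p) by (rewrite Hp; exact Ytq).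
  set (g := m e p).
  assert (Yg : Y g) by (apply (proj1 HY); assumption).
  assert (Ytg : Y (act D t g)) by (apply (HA t g e); auto; apply le_ml).
  unfold actX. fold p. fold g.
  destruct (dec (g = p)) as [E|NE].
  - rewrite E. unfold p. rewrite G_abs. unfold actT, PN, W; simpl.
    unfold PN in HP; unfold W in HW; simpl in HP, HW.
    rewrite E in Ytg. rewrite Hp in Ytg.
    destruct l as [|[f s] r]; simpl in *; rewrite actM; tauto.
  - assert (Hgp : xle D g p) by apply le_mr.
    destruct l as [|[e1 t1] r].
    + rewrite G_nil by exact NE. unfold actT, PN, W; simpl.
      rewrite (tmul1r D HD). unfold PN in HP; simpl in HP. split; [tauto|].
      exact Hgp.
    + destruct (dec (t0 = tone)) as [E0|NE0].
      * subst t0. rewrite G_cons1 by exact NE. unfold actT, PN, W; simpl.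
        rewrite (tmul1r D HD). unfold PN in HP; simpl in HP. split; [tauto|].
        unfold p, plusNF in Hgp; simpl in Hgp. rewrite act1 in Hgp.
        apply (le_trans _ _ _ Hgp (le_mr _ _)).
      * rewrite G_cons2 by assumption. unfold actT, PN, W; simpl.
        rewrite (tmul1r D HD). unfold PN in HP; simpl in HP. split; [tauto|].
        exact Hgp.
Qed.

Lemma good gs : gs <> [] -> Forall (inHQ D Y) gs ->
  PN (actW (concat gs) n0) /\ W (actW (concat gs) n0).
Proof.
  induction gs as [|g gs IH]; intros Hne HF; [congruence|].
  inversion HF as [|? ? Hg HF']; subst.
  destruct Hg as (t & e & Ye & Yte & Hg).
  simpl concat. rewrite actW_app, (Peq_inv _ _ Hg).
  destruct gs as [|g' gs'].
  - change (actW [] n0) with n0. destruct (dec (e = one)) as [E|NE].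
    + subst e. rewrite eval_te1. unfold PN, W; simpl. tauto.
    + rewrite eval_te2 by exact NE. unfold PN, W; simpl. rewrite act1.
      split; [tauto|]. apply le_one.
  - destruct (IH ltac:(discriminate) HF') as [HP HW].
    rewrite actW_te. apply good_step; assumption.
Qed.

Lemma canon hs : hs <> [] -> Forall (inHP D) hs ->
  (forall i, S i < length hs -> exists x, IsStar D (nth i hs []) x /\
      xlt D x (wplus D (nth (S i) hs []))) ->
  (forall i, 1 <= i < length hs -> ~ inX D (nth i hs [])) ->
  forall t e, Peq D (hd [] hs) (te t e) ->
  exists L, actW (concat hs) n0 = (t, L) /\
   ((L = [] /\ e = one) \/ (exists s L', L = (e, s) :: L' /\ xle D e (act D s (pt L')))) /\
   (P t L -> Forall (inHQ D Y) hs).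
Proof.
  induction hs as [|h hs IH]; [congruence|].
  intros _ HF Hadj HnX t e Hh. simpl hd in Hh.
  inversion HF as [|? ? Hh0 HF']; subst.
  destruct hs as [|h' rest].
  - simpl concat. rewrite app_nil_r, (Peq_inv _ _ Hh).
    destruct (dec (e = one)) as [E|NE].
    + subst e. rewrite eval_te1. exists []. split; [reflexivity|]. split; [left; auto|].
      intro HP. simpl in HP. constructor; [|constructor].
      exists t, one. tauto.
    + rewrite eval_te2 by exact NE. exists [(e, tone)]. split; [reflexivity|].
      split.
      * right. exists tone, []. simpl. rewrite act1. split; [reflexivity|apply le_one].
      * intro HP. simpl in HP. constructor; [|constructor]. exists t, e. tauto.
  - inversion HF' as [|? ? Hh1 _]; subst.
    destruct Hh1 as (t' & e' & Hh').
    destruct (IH ltac:(discriminate) HF') with (t := t') (e := e') as (L1 & Hev1 & Hsh1 & HP1).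
    + intros i Hi. apply (Hadj (S i)). simpl in *. lia.
    + intros i Hi. apply (HnX (S i)). simpl in *. lia.
    + exact Hh'.
    + destruct (Hadj 0 ltac:(simpl; lia)) as (x & Hx & Hlt). simpl in Hx, Hlt.
      assert (Hw : wplus D h' = act D t' e').
      { rewrite (wplus_Peq _ _ Hh'). unfold wplus; simpl. rewrite m1r. reflexivity. }
      rewrite Hw in Hlt.
      destruct (IsStar_te _ _ _ _ Hx Hh) as [Hx1 Hx2].
      assert (NE : e <> one).
      { intro E. rewrite (Hx1 E) in Hlt. destruct Hlt as [Hle Hne]. apply Hne.
        unfold xle in Hle. rewrite m1l in Hle. symmetry; exact Hle. }
      rewrite (Hx2 NE) in Hlt.
      assert (NT : t' <> tone).
      { intro E. subst t'. apply (HnX 1); [simpl; lia|]. simpl.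
        exists e'. eapply Peq_trans; [exact Hh'|apply te1_X]. }
      assert (Hpl : plusNF (t', L1) = act D t' e').
      { destruct Hsh1 as [[-> ->]|(s & L' & -> & Hle)]; unfold plusNF; simpl; [reflexivity|].
        rewrite Hle. reflexivity. }
      exists ((e, t') :: L1). split.
      * change (concat (h :: h' :: rest)) with (h ++ concat (h' :: rest)).
        rewrite actW_app, Hev1, (Peq_inv _ _ Hh), actW_te. unfold actX.
        rewrite Hpl. destruct Hlt as [Hle Hne]. rewrite Hle.
        rewrite G_gen.
        -- unfold actT; simpl. rewrite (tmul1r D HD). reflexivity.
        -- rewrite Hpl. exact Hne.
        -- intros _. exact NT.
      * split.
        -- right. exists t', L1. split; [reflexivity|].
           destruct Hlt as [Hle _]. unfold plusNF in Hpl; simpl in Hpl. rewrite Hpl. exact Hle.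
        -- intro HP. simpl in HP. destruct HP as (Ye & Yte & Htail).
           constructor.
           ++ exists t, e. tauto.
           ++ apply HP1. destruct Htail as [[E _]|H]; [contradiction|exact H].
Qed.

End S.

Theorem mainTheorem15 (T X : Type) (D : Data T X) (HD : Hyps D)
  (Y : X -> Prop) (HY : SubSemilatticeWithId D Y)
  (HA : condA D Y) (HB : condB D Y) :
  (forall (a : word) (hs : list word),
      inQ D Y a -> HPCanonical D hs a -> Forall (inHQ D Y) hs) /\
  (forall a : word, (inHP D a /\ inQ D Y a) <-> inHQ D Y a) /\
  (forall x : X, inQ D Y [inr x] <-> Y x).
Proof.
  assert (Part1 : forall (a : word) (hs : list word),
      inQ D Y a -> HPCanonical D hs a -> Forall (inHQ D Y) hs).
  { intros a hs (gs & Hgs & HFg & Hag) (Hhs & HF & Hah & Hadj & HnX).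
    destruct (good T X D HD Y HY HA gs Hgs HFg) as [HP _].
    destruct hs as [|h hs]; [congruence|].
    inversion HF as [|? ? Hh _]; subst. destruct Hh as (t & e & Hh).
    destruct (canon T X D HD Y (h :: hs) Hhs HF Hadj HnX t e Hh) as (L & Hev & _ & HQ).
    apply HQ.
    rewrite <- (Peq_inv T X D HD _ _ Hag), (Peq_inv T X D HD _ _ Hah), Hev in HP.
    exact HP. }
  split; [exact Part1|]. split.
  - intro a. split.
    + intros [HPa HQa].
      assert (H : Forall (inHQ D Y) [a]).
      { apply (Part1 a [a] HQa). split; [discriminate|]. split; [constructor; [exact HPa|constructor]|].
        split; [simpl; rewrite app_nil_r; apply Peq_refl|].
        split; intros i Hi; simpl in Hi; lia. }
      inversion H; assumption.
    + intros Ha. split.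
      * destruct Ha as (t & e & _ & _ & H). exists t, e. exact H.
      * exists [a]. split; [discriminate|]. split; [constructor; [exact Ha|constructor]|].
        simpl; rewrite app_nil_r; apply Peq_refl.
  - intro x. split.
    + intros (gs & Hgs & HFg & Hag).
      destruct (good T X D HD Y HY HA gs Hgs HFg) as [HP _].
      rewrite <- (Peq_inv T X D HD _ _ Hag) in HP.
      rewrite <- (Peq_inv T X D HD _ _ (te1_X T X D HD x)) in HP.
      destruct (dec (x = xone D)) as [E|NE].
      * subst x. rewrite eval_te1 in HP by exact HD. unfold PN in HP; simpl in HP. tauto.
      * rewrite eval_te2 in HP by assumption. unfold PN in HP; simpl in HP. tauto.
    + intro Hx. exists [te (tone D) x]. split; [discriminate|]. split.
      * constructor; [|constructor]. exists (tone D), x.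
        split; [exact Hx|]. split; [rewrite (Defs.act1 D HD); exact Hx| apply Peq_refl].
      * simpl. apply Peq_sym. apply te1_X. exact HD.
Qed.
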